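(* Assume the setup in the context and suppose $K\le n-4$. Then $T=K$ on the event $\{\epsilon_1=\epsilon_2=\cdots=\epsilon_K\}$ (which has probability $2^{1-K}$), and $T\ge K+2$ on its complement. Moreover, if $K=n-3$, then still $P(T=K)=2^{1-K}$ and $T\ge K+1$ on the complement of $\{T=K\}$.
   Context: Let $n\ge4$ and let $v_1,\dots,v_n$ be real numbers with $\sum_{i=1}^n v_i^2\le1$ ordered so that $v_n\ge v_1\ge v_{n-1}\ge v_2\ge v_3\ge\cdots\ge v_{n-2}\ge0$. Let $\epsilon_1,\dots,\epsilon_n$ be independent Rademacher random variables ($\pm1$ with probability $\tfrac12$ each). For $t\in\{1,\dots,n-1\}$ put $X_t:=\sum_{i=1}^t v_i\epsilon_i$, and for $t\in\{1,\dots,n\}$ put $M_t:=\sum_{i=1}^t v_i$. Define the random time $T:=\min\big(\{t\le n-1: |X_t|>1-v_{t+1}\}\cup\{n-1\}\big)$ and the deterministic index $K:=\min\big(\{t\le n-1: M_t>1-v_{t+1}\}\cup\{n-1\}\big)$. *)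

(* Defs.v *)
From HB Require Import structures.
From mathcomp Require Import all_boot all_order all_algebra.
Set Implicit Arguments. Unset Strict Implicit. Unset Printing Implicit Defensive.
Import Order.TTheory GRing.Theory Num.Theory.
Local Open Scope ring_scope.

(* A sign pattern of (eps_1,...,eps_n) is e : n.-tuple bool; eps_i = +1 iff
   the (i-1)-th entry of e (0-indexed) is true.  The n Rademacher variables
   are independent uniform, so the sample space is the uniform distribution
   on n.-tuple bool. *)
Definition sgn (R : ringType) (b : bool) : R := if b then 1 else -1.

Definition eps (n : nat) (e : n.-tuple bool) (i : nat) : bool := nth false e i.-1.

Definition Xt (R : ringType) (n : nat) (v : nat -> R) (e : n.-tuple bool) (t : nat) : R :=
  \sum_(1 <= i < t.+1) v i * sgn R (eps e i).
Definition Mt (R : ringType) (v : nat -> R) (t : nat) : R :=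
  \sum_(1 <= i < t.+1) v i.

Definition stop_time (n : nat) (P : nat -> bool) : nat :=
  \big[minn/(n - 1)%N]_(1 <= t < n | P t) t.

Definition Ttime (R : realDomainType) (n : nat) (v : nat -> R) (e : n.-tuple bool) : nat :=
  stop_time n (fun t => 1 - v t.+1 < `|Xt v e t|).
Definition Kidx (R : realDomainType) (n : nat) (v : nat -> R) : nat :=
  stop_time n (fun t => 1 - v t.+1 < Mt v t).

Definition first_eq (n K : nat) (e : n.-tuple bool) : bool :=
  all (fun i => eps e i == eps e 1) (iota 1 K).

Definition Prob (R : fieldType) (n : nat) (A : pred (n.-tuple bool)) : R :=
  (#|A|%:R) / (2 ^+ n).

Arguments Kidx {R} n v.
Arguments Ttime {R n} v e.

(* Main.v *)
Require Import Defs.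
From HB Require Import structures.
From mathcomp Require Import all_boot all_order all_algebra.
From mathcomp Require Import ring lra zify.
Import Order.TTheory GRing.Theory Num.Theory.
Local Open Scope ring_scope.

Lemma bmin_le_d (r : seq nat) d (P : pred nat) : (\big[minn/d]_(i <- r | P i) i <= d)%N.
Proof.
elim: r => [|x r IH]; rewrite ?big_nil ?big_cons //.
by case: ifP => // _; rewrite geq_min IH orbT.
Qed.

Lemma bmin_le_t (r : seq nat) d (P : pred nat) t :
  t \in r -> P t -> (\big[minn/d]_(i <- r | P i) i <= t)%N.
Proof.
elim: r => // x r IH; rewrite in_cons big_cons => /orP[/eqP->|ht] Pt.
  by rewrite Pt geq_minl.
by case: ifP => _; [rewrite geq_min IH ?orbT | exact: IH].
Qed.

Lemma bmin_ge (r : seq nat) d (P : pred nat) m : (m <= d)%N ->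
  (forall i, i \in r -> P i -> (m <= i)%N) -> (m <= \big[minn/d]_(i <- r | P i) i)%N.
Proof.
elim: r => [|x r IH] hd H; rewrite ?big_nil ?big_cons //.
have H' : forall i, i \in r -> P i -> (m <= i)%N.
  by move=> i hi; apply: H; rewrite in_cons hi orbT.
case: ifP => Px; last exact: IH.
by rewrite leq_min H ?mem_head // IH.
Qed.

Lemma bmin_cases (r : seq nat) d (P : pred nat) :
  \big[minn/d]_(i <- r | P i) i = d \/
  (P (\big[minn/d]_(i <- r | P i) i) /\ \big[minn/d]_(i <- r | P i) i \in r).
Proof.
elim: r => [|x r IH]; rewrite ?big_nil ?big_cons; first by left.
case: ifP => Px.
  rewrite /minn; case: ltnP => _.
    by right; rewrite Px mem_head.
  by case: IH => [->|[h1 h2]]; [left | right; rewrite h1 in_cons h2 orbT].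
by case: IH => [->|[h1 h2]]; [left | right; rewrite h1 in_cons h2 orbT].
Qed.

Lemma st_le n (P : pred nat) : (stop_time n P <= n - 1)%N.
Proof. exact: bmin_le_d. Qed.

Lemma st_min n (P : pred nat) t : (1 <= t < n)%N -> P t -> (stop_time n P <= t)%N.
Proof. by move=> ht Pt; apply: bmin_le_t => //; rewrite mem_index_iota. Qed.

Lemma st_ge n (P : pred nat) m : (m <= n - 1)%N ->
  (forall i, (1 <= i < n)%N -> P i -> (m <= i)%N) -> (m <= stop_time n P)%N.
Proof.
by move=> hm H; apply: bmin_ge => // i; rewrite mem_index_iota; apply: H.
Qed.

Lemma st_cases n (P : pred nat) : stop_time n P = (n - 1)%N \/
  (P (stop_time n P) /\ (1 <= stop_time n P < n)%N).
Proof.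
case: (bmin_cases (index_iota 1 n) (n - 1) P) => [h|[h1 h2]]; [left | right] => //.
by rewrite -mem_index_iota.
Qed.

Lemma sum_ge_term (R : realDomainType) (F : nat -> R) a b k : (a <= k < b)%N ->
  (forall i, (a <= i < b)%N -> 0 <= F i) -> F k <= \sum_(a <= i < b) F i.
Proof.
move=> /andP[h1 h2] H.
rewrite (big_cat_nat h1 (ltnW h2)) /= [\sum_(k <= i < b) _]big_ltn //.
have s1 : 0 <= \sum_(a <= i < k) F i.
  rewrite big_nat_cond; apply: sumr_ge0 => i /andP[/andP[i1 i2] _]; apply: H.
  by rewrite i1 (ltn_trans i2).
have s2 : 0 <= \sum_(k.+1 <= i < b) F i.
  rewrite big_nat_cond; apply: sumr_ge0 => i /andP[/andP[i1 i2] _]; apply: H.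
  by rewrite i2 andbT (leq_trans h1) // ltnW.
lra.
Qed.

Lemma Xt_le_Mt (R : realDomainType) n (v : nat -> R) (e : n.-tuple bool) t :
  (forall i, (1 <= i <= n)%N -> 0 <= v i) -> (t <= n)%N -> `|Xt v e t| <= Mt v t.
Proof.
move=> hv ht; rewrite /Xt /Mt.
apply: le_trans (ler_norm_sum _ _ _) _.
rewrite big_nat_cond [X in _ <= X]big_nat_cond; apply: ler_sum => i /andP[/andP[h1 h2] _].
rewrite normrM ger0_norm ?hv ?h1 ?(leq_trans _ ht) //.
by rewrite /sgn; case: eps; rewrite ?normrN normr1 mulr1.
Qed.

Lemma Xt_first (R : realDomainType) n (v : nat -> R) (e : n.-tuple bool) t :
  (forall i, (1 <= i <= t)%N -> eps e i = eps e 1) ->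
  Xt v e t = sgn R (eps e 1) * Mt v t.
Proof.
move=> H; rewrite /Xt /Mt mulr_sumr; apply: eq_big_nat => i /andP[h1 h2].
by rewrite H ?h1 // mulrC.
Qed.

Lemma Xt_notfirst (R : realDomainType) n (v : nat -> R) (e : n.-tuple bool) K :
  (forall i, (1 <= i <= n)%N -> 0 <= v i) -> (K <= n)%N ->
  (forall i, (1 <= i <= K)%N -> v K <= v i) ->
  ~~ first_eq K e -> `|Xt v e K| <= Mt v K - 2 * v K.
Proof.
move=> hv hKn hmon /allPn [j]; rewrite mem_iota => /andP[j1]; rewrite add1n ltnS => jK hj.
have Hk : forall b, exists2 k, (1 <= k <= K)%N & eps e k = b.
  move=> b; case Hs: (eps e 1); case: b.
  - by exists 1%N => //; rewrite (leq_trans j1 jK).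
  - by exists j; [rewrite j1 | move: hj; rewrite Hs; case: eps].
  - by exists j; [rewrite j1 | move: hj; rewrite Hs; case: eps].
  - by exists 1%N => //; rewrite (leq_trans j1 jK).
have hvK : forall i, (1 <= i < K.+1)%N -> 0 <= v i.
  by move=> i /andP[i1 i2]; rewrite hv // i1 (leq_trans _ hKn).
have hM : Mt v K - Xt v e K = \sum_(1 <= i < K.+1) (v i * (1 - sgn R (eps e i))).
  by rewrite /Mt /Xt -sumrB; apply: eq_bigr => i _; rewrite mulrBr mulr1.
have hP : Mt v K + Xt v e K = \sum_(1 <= i < K.+1) (v i * (1 + sgn R (eps e i))).
  by rewrite /Mt /Xt -big_split; apply: eq_bigr => i _; rewrite mulrDr mulr1.
have nn : forall b, forall i, (1 <= i < K.+1)%N -> 0 <= v i * (1 + sgn R b) /\ 0 <= v i * (1 - sgn R b).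
  move=> b i hi; have := hvK i hi; rewrite /sgn; case: b => h; split; lra.
have L1 : 2 * v K <= Mt v K - Xt v e K.
  have [k hk ek] := Hk false.
  have hk' : (1 <= k < K.+1)%N by rewrite ltnS.
  have := @sum_ge_term R (fun i => v i * (1 - sgn R (eps e i))) 1%N K.+1 k hk'.
  rewrite -hM => H; apply: le_trans (H _).
    by rewrite ek /sgn; have := hmon k hk; lra.
  by move=> i hi; case: (nn (eps e i) i hi).
have L2 : 2 * v K <= Mt v K + Xt v e K.
  have [k hk ek] := Hk true.
  have hk' : (1 <= k < K.+1)%N by rewrite ltnS.
  have := @sum_ge_term R (fun i => v i * (1 + sgn R (eps e i))) 1%N K.+1 k hk'.
  rewrite -hP => H; apply: le_trans (H _).
    by rewrite ek /sgn; have := hmon k hk; lra.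
  by move=> i hi; case: (nn (eps e i) i hi).
rewrite ler_norml; apply/andP; split; lra.
Qed.

Lemma card_geK n K : (K <= n)%N -> #|[pred i : 'I_n | (K <= i)%N]| = (n - K)%N.
Proof.
move=> hK.
rewrite cardE -(size_map val) -filter_map. rewrite -enumT val_enum_ord size_filter.
rewrite -(subnKC hK) iotaD count_cat add0n.
rewrite (eq_in_count (a2 := pred0)); last first.
  by move=> x; rewrite mem_iota add0n => /andP[_ h]; rewrite /= leqNgt h.
rewrite count_pred0 add0n (eq_in_count (a2 := predT)); last first.
  by move=> x; rewrite mem_iota => /andP[h _].
by rewrite count_predT size_iota addKn.
Qed.
Lemma card_Ab n K (b : bool) : (K <= n)%N ->
  #|[pred e : n.-tuple bool | all (fun i => nth false e i.-1 == b) (iota 1 K)]| = (2 ^ (n - K))%N.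
Proof.
move=> hK.
pose f (e : n.-tuple bool) : {ffun 'I_n -> bool} := [ffun i => tnth e i].
pose g (h : {ffun 'I_n -> bool}) : n.-tuple bool := [tuple h i | i < n].
have fK : cancel f g by move=> e; apply: eq_from_tnth => i; rewrite tnth_mktuple ffunE.
have gK : cancel g f by move=> h; apply/ffunP => i; rewrite ffunE tnth_mktuple.
have finj : injective f := can_inj fK.
rewrite -(card_image finj) -(@card_geK n K hK) -[X in (X ^ _)%N]card_bool -(@card_pffun_on _ _ b [pred i : 'I_n | (K <= i)%N] predT).
apply: eq_card => h.
rewrite -[h in LHS]gK mem_image //.
rewrite inE.
apply/idP/familyP.
- move/allP=> H i /=.
  case: ifP => // hi; rewrite inE /=.
  move: hi; rewrite inE /= => /negbT hi.
  have hiK : (i < K)%N by rewrite ltnNge.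
  have := H i.+1; rewrite mem_iota /= add1n ltnS hiK => /(_ isT) /=.
  by rewrite -(tnth_nth false (g h) i) tnth_mktuple.
- move=> H; apply/allP => j; rewrite mem_iota => /andP[j1 jK]; rewrite ?add1n in jK.
  have jn : (j.-1 < n)%N by rewrite (leq_trans _ hK) // -ltnS prednK.
  have := H (Ordinal jn); rewrite /= inE /= leqNgt -ltnS prednK // jK /=.
  by rewrite -[nth _ _ _]/(nth false (g h) (Ordinal jn)) -tnth_nth tnth_mktuple.
Qed.

Lemma vmono (R : realDomainType) n (v : nat -> R) :
  (forall i : nat, (2 <= i)%N -> (i < n - 2)%N -> v i.+1 <= v i) ->
  forall i j, (2 <= i)%N -> (i <= j)%N -> (j <= n - 2)%N -> v j <= v i.
Proof.
move=> hm i; elim=> [|j IH] hi; first by rewrite leqn0 => /eqP h; move: hi; rewrite h.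
rewrite leq_eqVlt => /orP[/eqP->|hij] hjn //.
apply: le_trans (IH hi hij (ltnW hjn)).
by apply: hm; lia.
Qed.

Lemma vnonneg (R : realDomainType) n (v : nat -> R) :
  (4 <= n)%N ->
  v 1%N <= v n -> v (n - 1)%N <= v 1%N -> v 2%N <= v (n - 1)%N ->
  (forall i : nat, (2 <= i)%N -> (i < n - 2)%N -> v i.+1 <= v i) ->
  0 <= v (n - 2)%N -> forall i, (1 <= i <= n)%N -> 0 <= v i.
Proof.
move=> n4 h1n hn1 h2 hm h0 i /andP[i1 iN].
have m := @vmono R n v hm.
have v2 : 0 <= v 2%N by apply: le_trans h0 (m _ _ _ _ _) => //; lia.
have vn1 : 0 <= v (n - 1)%N by apply: le_trans v2 h2.
have v1 : 0 <= v 1%N by apply: le_trans vn1 hn1.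
case: (ltnP i 2) => hi2.
  by have -> : i = 1%N by lia.
case: (leqP i (n - 2)) => hin.
  by apply: le_trans h0 (m _ _ _ _ _).
case: (ltnP i n) => hin'.
  by have -> : i = (n - 1)%N by lia.
have -> : i = n by lia.
by apply: le_trans v1 h1n.
Qed.

Lemma first_eq_b n K (e : n.-tuple bool) b : (1 <= K)%N ->
  (first_eq K e && (eps e 1 == b)) = all (fun i => nth false e i.-1 == b) (iota 1 K).
Proof.
case: K => // k _; rewrite /first_eq /eps /=.
case: (eqVneq (nth false e 0) b) => [<-|hne]; first by rewrite eqxx andbT.
by rewrite !andbF.
Qed.

Lemma card_first n K : (1 <= K <= n)%N ->
  #|(fun e : n.-tuple bool => first_eq K e)| = (2 ^ (n - K) + 2 ^ (n - K))%N.
Proof.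
move=> /andP[K1 Kn].
rewrite -(cardID (fun e : n.-tuple bool => eps e 1)).
congr (_ + _)%N.
  rewrite -(@card_Ab n K true Kn); apply: eq_card => e.
  by rewrite !inE /= -first_eq_b // eqb_id.
rewrite -(@card_Ab n K false Kn); apply: eq_card => e.
by rewrite !inE /= -first_eq_b // eqbF_neg andbC.
Qed.

Lemma prob_first (R : realFieldType) n K : (1 <= K <= n)%N ->
  Prob R (fun e : n.-tuple bool => first_eq K e) = 2 / 2 ^+ K.
Proof.
move=> hK; rewrite /Prob card_first // natrD natrX.
case/andP: hK => _ Kn.
rewrite -{3}(subnKC Kn) exprD.
have h1 : (2 : R) ^+ K != 0 by rewrite expf_neq0 // pnatr_eq0.
have h2 : (2 : R) ^+ (n - K) != 0 by rewrite expf_neq0 // pnatr_eq0.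
by field; rewrite h1 h2.
Qed.

Theorem mainTheorem7 (R : realFieldType) (n : nat) (v : nat -> R) :
  (4 <= n)%N ->
  \sum_(1 <= i < n.+1) v i ^+ 2 <= 1 ->
  v 1%N <= v n -> v (n - 1)%N <= v 1%N -> v 2%N <= v (n - 1)%N ->
  (forall i : nat, (2 <= i)%N -> (i < n - 2)%N -> v i.+1 <= v i) ->
  0 <= v (n - 2)%N ->
  ((Kidx n v <= n - 4)%N ->
     (forall e : n.-tuple bool, first_eq (Kidx n v) e -> Ttime v e = Kidx n v) /\
     (forall e : n.-tuple bool, ~~ first_eq (Kidx n v) e -> (Kidx n v + 2 <= Ttime v e)%N) /\
     Prob R (fun e : n.-tuple bool => first_eq (Kidx n v) e) = 2 / 2 ^+ Kidx n v) /\
  (Kidx n v = (n - 3)%N ->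
     Prob R (fun e : n.-tuple bool => Ttime v e == Kidx n v) = 2 / 2 ^+ Kidx n v /\
     (forall e : n.-tuple bool, Ttime v e != Kidx n v -> (Kidx n v + 1 <= Ttime v e)%N)).
Proof.
move=> n4 _ h1n hn1 h2 hm h0.
have hv := @vnonneg R n v n4 h1n hn1 h2 hm h0.
have mono := @vmono R n v hm.
pose PK := fun t => 1 - v t.+1 < Mt v t.
have KE : Kidx n v = stop_time n PK by [].
set K := Kidx n v in KE *.
have KleN : (K <= n - 1)%N by rewrite KE; apply: st_le.
have Kmin : forall t, (1 <= t < n)%N -> (t < K)%N -> Mt v t <= 1 - v t.+1.
  move=> t ht tK; rewrite leNgt; apply/negP => Pt.
  have := @st_min n PK t ht Pt; rewrite -KE; lia.
have KP : (K < n - 1)%N -> 1 - v K.+1 < Mt v K.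
  by rewrite KE; case: (st_cases n PK) => [->|[h _]] //; rewrite ltnn.
have K1 : (1 <= K)%N.
  by rewrite KE; case: (st_cases n PK) => [->|[_ /andP[h _]]] //; lia.
have Tge : forall (e : n.-tuple bool) (m : nat), (m <= n - 1)%N ->
    (forall i, (K <= i)%N -> (i < m)%N -> (1 <= i < n)%N -> `|Xt v e i| <= 1 - v i.+1) ->
    (m <= Ttime v e)%N.
  move=> e m hm' H; rewrite /Ttime; apply: st_ge => // i hi /= Pi.
  rewrite leqNgt; apply/negP => im.
  case: (ltnP i K) => iK.
    have := Kmin i hi iK; have := @Xt_le_Mt R n v e i hv (ltnW (proj2 (andP hi))).
    move: Pi; lra.
  by have := H i iK im hi; move: Pi; lra.
have TgeK : forall e : n.-tuple bool, (K <= Ttime v e)%N.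
  by move=> e; apply: Tge => // i g1 g2; lia.
have Tfirst : (K < n - 1)%N -> forall e : n.-tuple bool, first_eq K e -> Ttime v e = K.
  move=> hK e he; apply/eqP; rewrite eqn_leq TgeK andbT.
  apply: st_min; first by rewrite K1 /=; lia.
  rewrite /= (@Xt_first R n v e K).
    rewrite normrM [`|Mt _ _|]ger0_norm.
      by rewrite /sgn; case: eps; rewrite ?normrN normr1 mul1r; apply: KP; lia.
    rewrite /Mt big_nat_cond; apply: sumr_ge0 => i /andP[/andP[i1 i2] _].
    by apply: hv; lia.
  move=> i hi; apply/eqP; move/allP: he; apply.
  by rewrite mem_iota; lia.
have K2 : forall e : n.-tuple bool, ~~ first_eq K e -> (2 <= K)%N.
  move=> e; case: (ltnP K 2) => // hK; have -> : K = 1%N by lia.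
  by rewrite /first_eq /= eqxx.
have MK1 : (2 <= K)%N -> Mt v K <= 1.
  move=> hK; have := Kmin K.-1 ltac:(lia) ltac:(lia).
  rewrite prednK; last by lia.
  have E : Mt v K = Mt v K.-1 + v K.
    by rewrite /Mt prednK ?big_nat_recr //; lia.
  rewrite E; lra.
have Xnf : (K <= n - 3)%N -> forall e : n.-tuple bool, ~~ first_eq K e -> `|Xt v e K| <= 1 - 2 * v K.
  move=> hK e he; have k2 := K2 e he.
  have := @Xt_notfirst R n v e K hv ltac:(lia).
  have hmK : forall i, (1 <= i <= K)%N -> v K <= v i.
    move=> i /andP[i1 iK]; case: (ltnP i 2) => i2.
      have -> : i = 1%N by lia.
      apply: le_trans hn1; apply: le_trans h2; apply: mono; lia.
    by apply: mono; lia.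
  move=> /(_ hmK he); have := MK1 k2; lra.
split.
  move=> hK; split; first by apply: Tfirst; lia.
  split; last by apply: prob_first; lia.
  move=> e he; have k2 := K2 e he.
  have X1 := Xnf ltac:(lia) e he.
  have vK1 : v K.+1 <= v K by apply: mono; lia.
  have vK2 : v K.+2 <= v K.+1 by apply: mono; lia.
  have vK2' : 0 <= v K.+2 by apply: hv; lia.
  apply: Tge; first by lia.
  move=> i iK im hi.
  case: (eqVneq i K) => [->|iK']; first lra.
  have -> : i = K.+1 by lia.
  rewrite /Xt big_nat_recr /=; last by lia.
  rewrite -/(Xt v e K).
  apply: le_trans (ler_normD _ _) _.
  rewrite normrM ger0_norm; last by apply: hv; lia.
  by rewrite /sgn; case: eps; rewrite ?normrN normr1 mulr1; lra.
move=> hK.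
have Tiff : forall e : n.-tuple bool, (Ttime v e == K) = first_eq K e.
  move=> e; case he: (first_eq K e).
    by rewrite Tfirst ?eqxx //; lia.
  apply/negbTE; rewrite neq_ltn; apply/orP; right.
  apply: Tge; first by lia.
  move=> i iK im hi; have -> : i = K by lia.
  have := Xnf ltac:(lia) e (negbT he).
  have := mono K K.+1 ltac:(have := K2 e (negbT he); lia) ltac:(lia) ltac:(lia).
  have := hv K ltac:(lia); lra.
split.
  rewrite -(@prob_first R n K); last by lia.
  rewrite /Prob; congr (_%:R / _); by apply: eq_card => e; rewrite -!topredE /= Tiff.
move=> e hTe; have := TgeK e; rewrite addn1; move: hTe; rewrite eq_sym; lia.
Qed.
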